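(* Let $m\ge2$ be an integer and let $\omega\in\mathbb{R}^d$ with $\nu(\omega;\sigma)<\infty$ for some $\sigma>md$. Then Lebesgue-almost every point of the unit circle $\{|\lambda|=1\}$ is $m$-tangentially accessible for the set $\bigcup_{A>0}\Upsilon(A;\omega,\sigma)$. More precisely, for every $\eta>0$ there is $A>0$ such that the set of points of the unit circle that are $m$-tangentially accessible for $\Upsilon(A;\omega,\sigma)$ has complement in the unit circle of one-dimensional Lebesgue measure less than $\eta$.
   Context: $|k|=\sum_i|k_i|$; $\nu(\omega;\sigma)=\sup_{k\in\mathbb{Z}^d\setminus\{0\}}|e^{2\pi ik\cdot\omega}-1|^{-1}|k|^{-\sigma}$; $\nu(\lambda;\omega,\sigma)=\sup_{k\in\mathbb{Z}^d\setminus\{0\}}|e^{2\pi ik\cdot\omega}-\lambda|^{-1}|k|^{-\sigma}$. $\Upsilon(A;\omega,\sigma)=\{\lambda\in\mathbb{C}:\nu(\lambda;\omega,\sigma)\le A\}$, i.e. the complement of $\bigcup_{k\ne0}\{\lambda:|e^{2\pi ik\cdot\omega}-\lambda|<A^{-1}|k|^{-\sigma}\}$. Tangential accessibility: a point $\lambda_0$ is $m$-tangentially accessible for a set $\mathcal{C}\subseteq\mathbb{C}$ if there exist a unit complex number $u$ and $\delta>0$, $\gamma>0$ such that $\{\lambda_0+(t+is)u:\ |t|,|s|<\delta,\ s\ge\gamma|t|^m\}\subseteq\mathcal{C}$. *)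

(* Defs.v *)
(* classical reals. Complex numbers are pairs (x, y) : R * R. *)
From Stdlib Require Import Reals ZArith.
Open Scope R_scope.

Fixpoint sumR (n : nat) (f : nat -> R) : R :=
  match n with O => 0 | S n' => sumR n' f + f n' end.

(* k in Z^d and omega in R^d are represented by functions on indices < d *)
Definition dotZR (d : nat) (k : nat -> Z) (w : nat -> R) : R :=
  sumR d (fun i => IZR (k i) * w i).

Definition knorm (d : nat) (k : nat -> Z) : R :=
  sumR d (fun i => IZR (Z.abs (k i))).

Definition knonzero (d : nat) (k : nat -> Z) : Prop :=
  exists i, (i < d)%nat /\ k i <> 0%Z.

Definition cadd (p q : R * R) : R * R := (fst p + fst q, snd p + snd q).
Definition cmul (p q : R * R) : R * R :=
  (fst p * fst q - snd p * snd q, fst p * snd q + snd p * fst q).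
Definition cnorm (p : R * R) : R := sqrt (fst p ^ 2 + snd p ^ 2).
Definition cdist (p q : R * R) : R :=
  sqrt ((fst p - fst q) ^ 2 + (snd p - snd q) ^ 2).

Definition expi2pi (x : R) : R * R := (cos (2 * PI * x), sin (2 * PI * x)).

(* nu(omega; sigma) < infinity : the sup over k <> 0 of
   |e^{2 pi i k.omega} - 1|^{-1} |k|^{-sigma} is finite (in particular each
   term is finite, i.e. e^{2 pi i k.omega} <> 1). *)
Definition nu_finite (d : nat) (w : nat -> R) (sigma : R) : Prop :=
  exists B : R, forall k, knonzero d k ->
    0 < cdist (expi2pi (dotZR d k w)) (1, 0) /\
    / cdist (expi2pi (dotZR d k w)) (1, 0) * Rpower (knorm d k) (- sigma) <= B.

Definition Upsilon (d : nat) (w : nat -> R) (sigma A : R) (lam : R * R) : Prop :=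
  forall k, knonzero d k ->
    ~ (cdist (expi2pi (dotZR d k w)) lam < / A * Rpower (knorm d k) (- sigma)).

Definition tang_accessible (m : nat) (C : R * R -> Prop) (lam0 : R * R) : Prop :=
  exists u : R * R, cnorm u = 1 /\
  exists delta gamma : R, 0 < delta /\ 0 < gamma /\
    forall t s : R, Rabs t < delta -> Rabs s < delta -> gamma * Rabs t ^ m <= s ->
      C (cadd lam0 (cmul (t, s) u)).

(* A set E of angles theta in [0, 2 pi) (i.e. of points (cos theta, sin theta)
   of the unit circle, arc-length measure) has Lebesgue (outer) measure < eta:
   it is covered by countably many open intervals of total length < eta. *)
Definition small_angle_set (E : R -> Prop) (eta : R) : Prop :=
  exists a b : nat -> R,
    (forall n, a n <= b n) /\
    (exists eta', eta' < eta /\ forall N, sumR N (fun n => b n - a n) <= eta') /\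
    (forall theta, E theta -> exists n, a n < theta < b n).

Definition bad_angles (m : nat) (C : R * R -> Prop) (theta : R) : Prop :=
  0 <= theta < 2 * PI /\ ~ tang_accessible m C (cos theta, sin theta).

(* Main.v *)
Require Import Defs.
From Stdlib Require Import Reals ZArith Lra Lia Psatz List Classical.
Open Scope R_scope.

Lemma sumR_ext n f g : (forall i, (i < n)%nat -> f i = g i) -> sumR n f = sumR n g.
Proof. induction n; intros H; simpl; [reflexivity|]. rewrite IHn by (intros; apply H; lia). rewrite H by lia. reflexivity. Qed.

Lemma sumR_le n f g : (forall i, (i < n)%nat -> f i <= g i) -> sumR n f <= sumR n g.
Proof. induction n; intros H; simpl; [lra|]. assert (sumR n f <= sumR n g) by (apply IHn; intros; apply H; lia). assert (f n <= g n) by (apply H; lia). lra. Qed.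

Lemma sumR_shift n f : sumR (S n) f = f 0%nat + sumR n (fun i => f (S i)).
Proof. induction n; simpl in *; [lra|]. rewrite IHn. lra. Qed.

Lemma sumR_scal n c f : sumR n (fun i => c * f i) = c * sumR n f.
Proof. induction n; simpl; [ring|]. rewrite IHn. ring. Qed.

Lemma sumR_zero n : sumR n (fun _ => 0) = 0.
Proof. induction n; simpl; [ring|]. rewrite IHn. ring. Qed.

Lemma geom_sum q n : sumR n (fun j => q ^ j) * (1 - q) = 1 - q ^ n.
Proof. induction n; simpl; [ring|]. rewrite Rmult_plus_distr_r, IHn. ring. Qed.

Lemma geom_le q n : 0 <= q < 1 -> sumR n (fun j => q^j) <= / (1 - q).
Proof. intros Hq. pose proof (geom_sum q n) as H0. assert (0 <= q^n) by (apply pow_le; lra).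
 apply Rmult_le_reg_r with (1 - q); [lra|]. rewrite H0, Rinv_l by lra. lra. Qed.

Lemma sin_lb_ge y : 0 <= y <= 2 -> y / 4 <= sin_lb y.
Proof. intros. unfold sin_lb, sin_approx. cbn [sum_f_R0]. unfold sin_term.
change (2*0+1)%nat with 1%nat. change (2*1+1)%nat with 3%nat. change (2*2+1)%nat with 5%nat. change (2*3+1)%nat with 7%nat.
change (Factorial.fact 7) with 5040%nat. change (Factorial.fact 5) with 120%nat. change (Factorial.fact 3) with 6%nat. change (Factorial.fact 1) with 1%nat.
rewrite !INR_IZR_INZ. change (Z.of_nat 5040) with 5040%Z. change (Z.of_nat 120) with 120%Z. change (Z.of_nat 6) with 6%Z. change (Z.of_nat 1) with 1%Z.
simpl pow.
assert (0 <= y*y <= 4) by nra.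
assert (0 <= y*y*y*y) by nra.
assert (y*y*y*y*y*y <= 64) by nra.
nra.
Qed.

Lemma sin_sq_lb y : - (PI/2) <= y <= PI/2 -> y * y / 16 <= sin y * sin y.
Proof. intros H. pose proof PI_4. pose proof PI_RGT_0.
  destruct (Rle_lt_dec 0 y).
  - destruct (SIN y) as [H2 _]; try lra. pose proof (sin_lb_ge y). nra.
  - destruct (SIN (-y)) as [H2 _]; try lra. pose proof (sin_lb_ge (-y)). rewrite sin_neg in H2. nra.
Qed.

Lemma one_minus_cos_lb b : -PI <= b <= PI -> b * b / 64 <= 1 - cos b.
Proof. intros H. replace b with (2 * (b/2)) at 3 by field. rewrite cos_2a_sin.
  pose proof (sin_sq_lb (b/2)). assert (- (PI/2) <= b/2 <= PI/2) by lra. specialize (H0 H1). nra. Qed.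

Lemma cos_Zper y z : cos (y + 2 * IZR z * PI) = cos y.
Proof. destruct z as [|p|p].
  - simpl. f_equal. ring.
  - replace (IZR (Z.pos p)) with (INR (Pos.to_nat p)) by (rewrite INR_IZR_INZ, positive_nat_Z; reflexivity). apply cos_period.
  - rewrite <- (cos_period (y + 2 * IZR (Z.neg p) * PI) (Pos.to_nat p)). f_equal.
    rewrite INR_IZR_INZ, positive_nat_Z. rewrite <- Pos2Z.opp_pos, opp_IZR. ring.
Qed.

Lemma sin_Zper y z : sin (y + 2 * IZR z * PI) = sin y.
Proof. destruct z as [|p|p].
  - simpl. f_equal. ring.
  - replace (IZR (Z.pos p)) with (INR (Pos.to_nat p)) by (rewrite INR_IZR_INZ, positive_nat_Z; reflexivity). apply sin_period.
  - rewrite <- (sin_period (y + 2 * IZR (Z.neg p) * PI) (Pos.to_nat p)). f_equal.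
    rewrite INR_IZR_INZ, positive_nat_Z. rewrite <- Pos2Z.opp_pos, opp_IZR. ring.
Qed.

Lemma dist_lb th ph t s : 0 <= s ->
  1 - cos (ph - th) <= cdist (cos ph, sin ph) (cadd (cos th, sin th) (cmul (t, s) (sin th, - cos th))).
Proof. intros Hs. unfold cdist, cadd, cmul; simpl. rewrite cos_minus.
  set (a := cos ph). set (b := sin ph). set (c := cos th). set (e := sin th).
  assert (H1 : a*a + b*b = 1) by (pose proof (sin2_cos2 ph); unfold Rsqr in *; unfold a, b; lra).
  assert (H2 : c*c + e*e = 1) by (pose proof (sin2_cos2 th); unfold Rsqr in *; unfold c, e; lra).
  set (q := a * c + b * e).
  destruct (Rle_lt_dec (1 - q) 0).
  - apply Rle_trans with 0; [lra| apply sqrt_pos].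
  - rewrite <- (sqrt_square (1 - q)) at 1 by lra. apply sqrt_le_1_alt.
    set (w := b * c - a * e).
    match goal with |- _ <= ?X => assert (E : X
       = (a*a+b*b) + ((1+s)^2 + t^2) * (c*c+e*e) - 2 * (1+s) * q + 2 * t * w) by (unfold q, w; ring) end.
    rewrite E, H1, H2.
    assert (Hqw : q*q + w*w = 1) by (replace (q*q+w*w) with ((a*a+b*b)*(c*c+e*e)) by (unfold q, w; ring); rewrite H1, H2; ring).
    clearbody a b c e q w. assert (0 <= s * (1-q)) by (apply Rmult_le_pos; lra). pose proof (Rle_0_sqr (t+w)). pose proof (Rle_0_sqr s). unfold Rsqr in *.
    match goal with |- ?L <= ?R => assert (Hd : R - L = (t+w)*(t+w) + s*s + 2*(s*(1-q)) + (1 - (q*q+w*w))) by ring end.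
    rewrite Hqw in Hd. lra.
Qed.

Lemma access d m w sigma A th :
  (forall k, knonzero d k -> / A * Rpower (knorm d k) (-sigma) <= 1 - cos (2*PI*dotZR d k w - th)) ->
  tang_accessible m (Upsilon d w sigma A) (cos th, sin th).
Proof. intros H. exists (sin th, - cos th). split.
  { unfold cnorm; simpl. pose proof (sin2_cos2 th). unfold Rsqr in *. match goal with |- sqrt ?X = 1 => replace X with 1 by nra end. apply sqrt_1. }
  exists 1, 1. split; [lra|]. split; [lra|].
  intros t s _ _ Hs. intros k Hk Hlt.
  assert (0 <= s) by (pose proof (pow_le (Rabs t) m (Rabs_pos t)); lra).
  pose proof (dist_lb th (2*PI*dotZR d k w) t s H0). specialize (H k Hk).
  unfold expi2pi in Hlt. lra.
Qed.

Fixpoint zsum (d : nat) (k : nat -> Z) : Z :=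
  match d with O => 0%Z | S d' => (zsum d' k + Z.abs (k d'))%Z end.

Lemma knorm_zsum d k : knorm d k = IZR (zsum d k).
Proof. unfold knorm. induction d; simpl; [reflexivity|]. rewrite IHd, plus_IZR. reflexivity. Qed.

Lemma zsum_nonneg d k : (0 <= zsum d k)%Z.
Proof. induction d; simpl; lia. Qed.

Lemma zsum_ge d k i : (i < d)%nat -> (Z.abs (k i) <= zsum d k)%Z.
Proof. induction d; intros H; [lia|]. simpl. destruct (Nat.eq_dec i d) as [->|Hne].
 - pose proof (zsum_nonneg d k). lia.
 - assert (i < d)%nat as H0 by lia. specialize (IHd H0). lia. Qed.

Lemma zsum_pos d k : knonzero d k -> (1 <= zsum d k)%Z.
Proof. intros [i [Hi Hk]]. pose proof (zsum_ge d k i Hi). lia. Qed.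

Lemma dotZR_ext d k k' w : (forall i, (i<d)%nat -> k' i = k i) -> dotZR d k' w = dotZR d k w.
Proof. intros H. unfold dotZR. apply sumR_ext. intros i Hi. rewrite H by exact Hi. reflexivity. Qed.

Definition zrange (M : nat) : list Z := map (fun n => (Z.of_nat n - Z.of_nat M)%Z) (seq 0 (2*M+1)).

Lemma zrange_in z M : (Z.abs z <= Z.of_nat M)%Z -> In z (zrange M).
Proof. intros H. unfold zrange. apply in_map_iff. exists (Z.to_nat (z + Z.of_nat M)). split.
 - rewrite Z2Nat.id by lia. lia.
 - apply in_seq. lia. Qed.

Fixpoint boxlist (d M : nat) : list (nat -> Z) :=
  match d with
  | O => (fun _ => 0%Z) :: nil
  | S d' => flat_map (fun k => map (fun z => fun i => if Nat.eqb i d' then z else k i) (zrange M)) (boxlist d' M)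
  end.

Lemma flat_map_length_const {A B} (f : A -> list B) c l : (forall x, length (f x) = c) -> length (flat_map f l) = (length l * c)%nat.
Proof. intros H. induction l; simpl; [reflexivity|]. rewrite length_app, H, IHl. reflexivity. Qed.

Lemma boxlist_length d M : length (boxlist d M) = ((2*M+1)^d)%nat.
Proof. induction d; [reflexivity|]. cbn [boxlist]. rewrite flat_map_length_const with (c := (2*M+1)%nat).
 - rewrite IHd, Nat.pow_succ_r'. apply Nat.mul_comm.
 - intros. unfold zrange. rewrite length_map, length_map, length_seq. reflexivity. Qed.

Lemma boxlist_complete d M k : (forall i, (i<d)%nat -> (Z.abs (k i) <= Z.of_nat M)%Z) ->
  exists k', In k' (boxlist d M) /\ forall i, (i<d)%nat -> k' i = k i.
Proof. induction d; intros H.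
 - exists (fun _ => 0%Z). split; [left; reflexivity| intros; lia].
 - destruct IHd as [k'' [Hin Hag]]. { intros; apply H; lia. }
   exists (fun i => if Nat.eqb i d then k d else k'' i). split.
   + cbn [boxlist]. apply in_flat_map. exists k''. split; [exact Hin|]. apply in_map_iff. exists (k d). split; [reflexivity|]. apply zrange_in. apply H. lia.
   + intros i Hi. destruct (Nat.eqb_spec i d) as [->|Hne]; [reflexivity|]. apply Hag. lia.
Qed.

Definition cang d w k : R := 2*PI*(dotZR d k w - IZR (Zfloor (dotZR d k w))).
Definition ivs3 (c r : R) : list (R*R) :=
  (c - 2*PI - r, c - 2*PI + r) :: (c - r, c + r) :: (c + 2*PI - r, c + 2*PI + r) :: nil.
Definition seg d w (rho : nat -> R) (j : nat) : list (R*R) :=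
  (0,0) :: flat_map (fun k => ivs3 (cang d w k) (rho j)) (boxlist d (2^(S j))).
Fixpoint Cat (sg : nat -> list (R*R)) (N : nat) : list (R*R) :=
  match N with O => sg O | S n => Cat sg n ++ sg (S n) end.

Lemma Cat_len sg N : (forall j, (1 <= length (sg j))%nat) -> (S N <= length (Cat sg N))%nat.
Proof. intros H. induction N; simpl; [apply H|]. rewrite length_app. specialize (H (S N)). lia. Qed.

Lemma Cat_prefix sg N N' : (N <= N')%nat -> exists t, Cat sg N' = Cat sg N ++ t.
Proof. intros H. induction H.
 - exists nil. rewrite app_nil_r. reflexivity.
 - destruct IHle as [t Ht]. exists (t ++ sg (S m)). simpl. rewrite Ht, app_assoc. reflexivity. Qed.

Lemma Cat_nth sg N n d0 : (forall j, (1 <= length (sg j))%nat) -> (n < length (Cat sg N))%nat ->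
  nth n (Cat sg n) d0 = nth n (Cat sg N) d0.
Proof. intros H Hn. destruct (le_lt_dec n N) as [Hle|Hlt].
 - destruct (Cat_prefix sg n N Hle) as [t Ht]. rewrite Ht, app_nth1; [reflexivity|]. pose proof (Cat_len sg n H). lia.
 - destruct (Cat_prefix sg N n (Nat.lt_le_incl _ _ Hlt)) as [t Ht]. rewrite Ht, app_nth1; [reflexivity| exact Hn]. Qed.

Lemma In_Cat sg j x : In x (sg j) -> In x (Cat sg j).
Proof. destruct j; simpl; [auto|]. intros; apply in_or_app; right; auto. Qed.

Lemma Cat_cover sg j x d0 : (forall j, (1 <= length (sg j))%nat) -> In x (sg j) -> exists n, nth n (Cat sg n) d0 = x.
Proof. intros H Hx. destruct (In_nth (Cat sg j) x d0 (In_Cat sg j x Hx)) as [n [Hn Hnth]].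
  exists n. rewrite (Cat_nth sg j n d0 H Hn). exact Hnth. Qed.

Definition lsum (l : list (R*R)) : R := fold_right (fun x acc => (snd x - fst x) + acc) 0 l.

Lemma lsum_app l l' : lsum (l ++ l') = lsum l + lsum l'.
Proof. induction l; simpl; [ring|]. unfold lsum in *. simpl. rewrite IHl. ring. Qed.

Lemma lsum_flat {A} (f : A -> list (R*R)) c l : (forall x, lsum (f x) = c) -> lsum (flat_map f l) = INR (length l) * c.
Proof. intros H. induction l; [simpl; ring|]. cbn [flat_map length]. rewrite lsum_app, H, IHl, S_INR. ring. Qed.

Lemma lsum_nonneg l : (forall x, In x l -> fst x <= snd x) -> 0 <= lsum l.
Proof. induction l; intros H; unfold lsum; simpl; [lra|]. fold (lsum l).
  assert (fst a <= snd a) by (apply H; left; auto). assert (0 <= lsum l) by (apply IHl; intros; apply H; right; auto). lra. Qed.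

Lemma sumR_nth_le l N : (forall x, In x l -> fst x <= snd x) ->
  sumR N (fun n => snd (nth n l (0,0)) - fst (nth n l (0,0))) <= lsum l.
Proof. revert N. induction l as [|x l IH]; intros N H.
 - rewrite (sumR_ext N _ (fun _ => 0)). + rewrite sumR_zero. unfold lsum; simpl; lra. + intros i _. destruct i; simpl; ring.
 - destruct N.
   + cbn [sumR]. apply (lsum_nonneg (x :: l) H).
   + rewrite sumR_shift.
     change (sumR N (fun i => snd (nth (S i) (x::l) (0,0)) - fst (nth (S i) (x::l) (0,0)))) with
       (sumR N (fun i => snd (nth i l (0,0)) - fst (nth i l (0,0)))).
     change (lsum (x::l)) with (snd x - fst x + lsum l). simpl (nth 0 _ _).
     assert (sumR N (fun i => snd (nth i l (0,0)) - fst (nth i l (0,0))) <= lsum l) by (apply IH; intros; apply H; right; auto).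
     lra.
Qed.

Lemma nth_prop {A} (P : A -> Prop) l n d0 : (forall x, In x l -> P x) -> P d0 -> P (nth n l d0).
Proof. revert n. induction l as [|a l IHl]; intros n H H0; destruct n; simpl; auto.
  - apply H; left; auto.
  - apply IHl; auto. intros; apply H; right; auto. Qed.

Lemma lsum_Cat sg N : lsum (Cat sg N) = sumR (S N) (fun j => lsum (sg j)).
Proof. induction N; [simpl; ring|]. cbn [Cat]. rewrite lsum_app, IHN. reflexivity. Qed.

Lemma exp_le' a b : a <= b -> exp a <= exp b.
Proof. intros H. destruct (Rle_lt_or_eq_dec _ _ H) as [H1|H1]; [left; apply exp_increasing; exact H1| rewrite H1; lra]. Qed.

Lemma exp_INR_mul n y : exp (INR n * y) = exp y ^ n.
Proof. induction n; [simpl; rewrite Rmult_0_l; apply exp_0|]. rewrite S_INR, Rmult_plus_distr_r, Rmult_1_l, exp_plus, IHn. simpl. ring. Qed.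

Lemma pow_exp a n : 0 < a -> a ^ n = exp (INR n * ln a).
Proof. intros H. rewrite exp_INR_mul, exp_ln by exact H. reflexivity. Qed.

Lemma cang_range d w k : 0 <= cang d w k < 2 * PI.
Proof. unfold cang. pose proof (Zfloor_bound (dotZR d k w)). pose proof PI_RGT_0. nra. Qed.

Lemma bad_interval ph th r rho : 0 <= ph < 2*PI -> 0 <= th < 2*PI -> 1 - cos (ph - th) < r ->
  64 * r <= rho * rho -> 0 <= rho -> exists y, In y (ivs3 ph rho) /\ fst y < th < snd y.
Proof. intros Hph Hth Hc Hr Hrho. pose proof PI_RGT_0.
  assert (key : forall b, -PI <= b <= PI -> 1 - cos b < r -> - rho < b < rho).
  { intros b Hb Hcb. pose proof (one_minus_cos_lb b Hb). split; nra. }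
  destruct (Rlt_le_dec PI (ph - th)) as [H1|H1].
  - assert (E : ph - th = (ph - 2*PI - th) + 2 * IZR 1 * PI) by (simpl; ring).
    rewrite E, cos_Zper in Hc. specialize (key (ph - 2*PI - th) ltac:(lra) Hc).
    exists (ph - 2*PI - rho, ph - 2*PI + rho). split; [left; reflexivity| simpl; lra].
  - destruct (Rle_lt_dec (-PI) (ph - th)) as [H2|H2].
    + specialize (key (ph - th) ltac:(lra) Hc).
      exists (ph - rho, ph + rho). split; [right; left; reflexivity| simpl; lra].
    + assert (E : ph - th = (ph + 2*PI - th) + 2 * IZR (-1) * PI) by (simpl; ring).
      rewrite E, cos_Zper in Hc. specialize (key (ph + 2*PI - th) ltac:(lra) Hc).
      exists (ph + 2*PI - rho, ph + 2*PI + rho). split; [right; right; left; reflexivity| simpl; lra].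
Qed.

Lemma core d m w sigma : (2 <= m)%nat -> INR m * INR d < sigma -> forall eta, 0 < eta ->
  exists A, 0 < A /\ small_angle_set (bad_angles m (Upsilon d w sigma A)) eta.
Proof.
  intros Hm Hsig eta Heta.
  assert (Hd2 : 2 * INR d < sigma).
  { assert (2 <= INR m) by (replace 2 with (INR 2) by (simpl; ring); apply le_INR; lia). pose proof (pos_INR d). nra. }
  assert (Hs0 : 0 <= sigma) by (pose proof (pos_INR d); lra).
  set (p := sigma / 2).
  set (x := exp (- (p * ln 2))).
  set (q := 2 ^ d * x).
  assert (Hln2 : 0 < ln 2) by (pose proof ln_lt_2; lra).
  assert (Hx : 0 < x) by apply exp_pos.
  assert (Hq0 : 0 <= q) by (unfold q; pose proof (pow_lt 2 d ltac:(lra)); nra).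
  assert (Hq1 : q < 1).
  { unfold q, x. rewrite (pow_exp 2 d) by lra. rewrite <- exp_plus. rewrite <- exp_0. apply exp_increasing.
    unfold p. nra. }
  assert (H8 : 0 < 8 ^ d) by (apply pow_lt; lra).
  set (D := 6 * 8 ^ d / (1 - q)).
  assert (HD : 0 < D) by (unfold D; apply Rdiv_lt_0_compat; lra).
  set (Bc := eta / (2 * D)).
  assert (HBc : 0 < Bc) by (unfold Bc; apply Rdiv_lt_0_compat; lra).
  set (A := 64 / (Bc * Bc)).
  assert (HA : 0 < A) by (unfold A; apply Rdiv_lt_0_compat; nra).
  assert (HiA : / A = Bc * Bc / 64) by (unfold A; field; lra).
  set (rho := fun j : nat => Bc * x ^ j).
  assert (Hrho : forall j, 0 <= rho j) by (intros j; unfold rho; pose proof (pow_lt x j Hx); nra).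
  set (sg := seg d w rho).
  assert (F1 : forall j, (1 <= length (sg j))%nat) by (intros; unfold sg, seg; simpl; lia).
  assert (F2 : forall j y, In y (sg j) -> fst y <= snd y).
  { intros j y Hy. unfold sg, seg in Hy. destruct Hy as [<-|Hy]; [simpl; lra|].
    apply in_flat_map in Hy. destruct Hy as [k [_ Hy]]. specialize (Hrho j).
    destruct Hy as [<-|[<-|[<-|[]]]]; simpl; lra. }
  assert (F3 : forall N y, In y (Cat sg N) -> fst y <= snd y).
  { induction N; intros y Hy; [apply (F2 0%nat); exact Hy|]. simpl in Hy. apply in_app_or in Hy.
    destruct Hy as [Hy|Hy]; [apply IHN; exact Hy| apply (F2 (S N)); exact Hy]. }
  assert (F4 : forall j, lsum (sg j) <= 6 * Bc * 8 ^ d * q ^ j).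
  { intros j. unfold sg, seg.
    change (lsum ((0,0) :: flat_map (fun k => ivs3 (cang d w k) (rho j)) (boxlist d (2 ^ S j))))
      with (snd (0,0) - fst (0,0) + lsum (flat_map (fun k => ivs3 (cang d w k) (rho j)) (boxlist d (2 ^ S j)))).
    rewrite (lsum_flat _ (6 * rho j)).
    2: { intros k. unfold lsum, ivs3. simpl. ring. }
    rewrite boxlist_length, pow_INR. simpl fst; simpl snd.
    assert (Hle : INR (2 * 2 ^ S j + 1) <= 8 * 2 ^ j).
    { assert (Hn : (2 * 2 ^ S j + 1 <= 8 * 2 ^ j)%nat).
      { rewrite Nat.pow_succ_r'. pose proof (Nat.pow_le_mono_r 2 0 j ltac:(lia) ltac:(lia)). simpl in H. lia. }
      apply le_INR in Hn. rewrite mult_INR, pow_INR in Hn. replace (INR 8) with 8 in Hn by (simpl; ring).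
      replace (INR 2) with 2 in Hn by (simpl; ring). exact Hn. }
    assert (Hp : INR (2 * 2 ^ S j + 1) ^ d <= (8 * 2 ^ j) ^ d) by (apply pow_incr; split; [apply pos_INR| exact Hle]).
    assert (Eq : (8 * 2 ^ j) ^ d * (6 * rho j) = 6 * Bc * 8 ^ d * q ^ j).
    { unfold rho, q. rewrite !Rpow_mult_distr. rewrite <- !pow_mult. rewrite (Nat.mul_comm j d). ring. }
    pose proof (Hrho j). nra. }
  exists A. split; [exact HA|].
  exists (fun n => fst (nth n (Cat sg n) (0,0))), (fun n => snd (nth n (Cat sg n) (0,0))).
  split; [|split].
  - intros n. apply (nth_prop (fun y => fst y <= snd y)); [apply F3| simpl; lra].
  - exists (eta / 2). split; [lra|]. intros N.
    rewrite (sumR_ext N _ (fun n => snd (nth n (Cat sg N) (0,0)) - fst (nth n (Cat sg N) (0,0)))).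
    2: { intros i Hi. pose proof (Cat_len sg N F1). rewrite (Cat_nth sg N i (0,0) F1) by lia. reflexivity. }
    eapply Rle_trans; [apply sumR_nth_le; apply F3|].
    rewrite lsum_Cat. eapply Rle_trans; [apply sumR_le; intros i _; apply F4|].
    rewrite sumR_scal. eapply Rle_trans; [apply Rmult_le_compat_l; [nra| apply geom_le; lra]|].
    right. unfold Bc, D. field. lra.
  - intros th [Hth Hna].
    destruct (classic (exists k, knonzero d k /\ 1 - cos (2*PI*dotZR d k w - th) < / A * Rpower (knorm d k) (-sigma)))
      as [[k [Hk Hlt]]|Hno].
    2: { exfalso. apply Hna, access. intros k Hk. apply Rnot_lt_le. intro Hc. apply Hno. exists k. split; assumption. }
    pose proof (zsum_pos d k Hk) as Hz.
    set (n0 := Z.to_nat (zsum d k)).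
    assert (HK : knorm d k = INR n0) by (rewrite knorm_zsum; unfold n0; rewrite INR_IZR_INZ, Z2Nat.id by lia; reflexivity).
    assert (Hn0 : (0 < n0)%nat) by (unfold n0; lia).
    set (j := Nat.log2 n0).
    destruct (Nat.log2_spec n0 Hn0) as [Hj1 Hj2]. fold j in Hj1, Hj2.
    destruct (boxlist_complete d (2 ^ S j) k) as [k' [Hk'in Hk'ag]].
    { intros i Hi. pose proof (zsum_ge d k i Hi). assert (Z.of_nat n0 = zsum d k) by (unfold n0; lia). lia. }
    assert (Hdot : dotZR d k' w = dotZR d k w) by (apply dotZR_ext; exact Hk'ag).
    assert (Hcos : cos (2*PI*dotZR d k w - th) = cos (cang d w k' - th)).
    { unfold cang. rewrite Hdot. rewrite <- (cos_Zper (2 * PI * (dotZR d k w - IZR (Zfloor (dotZR d k w))) - th) (Zfloor (dotZR d k w))).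
      f_equal. ring. }
    assert (Hr : 64 * (/ A * Rpower (knorm d k) (-sigma)) <= rho j * rho j).
    { rewrite HiA, HK. unfold Rpower, rho.
      assert (HKj : 2 ^ j <= INR n0) by (apply le_INR in Hj1; rewrite pow_INR in Hj1; replace (INR 2) with 2 in Hj1 by (simpl; ring); exact Hj1).
      assert (H2j : 0 < 2 ^ j) by (apply pow_lt; lra).
      assert (Hln : ln (2 ^ j) <= ln (INR n0)).
      { destruct (Rle_lt_or_eq_dec _ _ HKj) as [Hl|Hl]; [left; apply ln_increasing; assumption| rewrite Hl; lra]. }
      rewrite ln_pow in Hln by lra.
      assert (Hexp : exp (- sigma * ln (INR n0)) <= x ^ j * x ^ j).
      { rewrite <- Rpow_mult_distr. unfold x. rewrite <- exp_plus, <- exp_INR_mul. apply exp_le'. unfold p. nra. }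
      assert (0 <= Bc * Bc) by nra. nra. }
    destruct (bad_interval (cang d w k') th (/ A * Rpower (knorm d k) (-sigma)) (rho j) (cang_range d w k') Hth)
      as [y [Hy Hyth]]; [rewrite <- Hcos; exact Hlt| exact Hr| apply Hrho|].
    assert (Hyin : In y (sg j)).
    { unfold sg, seg. right. apply in_flat_map. exists k'. split; [exact Hk'in| exact Hy]. }
    destruct (Cat_cover sg j y (0,0) F1 Hyin) as [n Hn]. exists n. rewrite Hn. exact Hyth.
Qed.

Theorem mainTheorem4 (d m : nat) (w : nat -> R) (sigma : R) :
  (2 <= m)%nat ->
  INR m * INR d < sigma ->
  nu_finite d w sigma ->
  (* a.e. point of the unit circle is m-tangentially accessible for
     the union over A > 0 of Upsilon(A; omega, sigma) *)
  (forall eps : R, 0 < eps ->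
     small_angle_set
       (bad_angles m (fun lam => exists A, 0 < A /\ Upsilon d w sigma A lam)) eps) /\
  (* quantitative version *)
  (forall eta : R, 0 < eta ->
     exists A : R, 0 < A /\
       small_angle_set (bad_angles m (Upsilon d w sigma A)) eta).
Proof.
  intros Hm Hsig _.
  pose proof (core d m w sigma Hm Hsig) as Hmain.
  split.
  - intros eps Heps. destruct (Hmain eps Heps) as [A [HA [a [b [H1 [H2 H3]]]]]].
    exists a, b. split; [exact H1|]. split; [exact H2|]. intros th [Hth Hna]. apply H3. split; [exact Hth|].
    intros Hacc. apply Hna. destruct Hacc as [u [Hu [del [gam [Hd [Hg Hreg]]]]]].
    exists u. split; [exact Hu|]. exists del, gam. split; [exact Hd|]. split; [exact Hg|].
    intros. exists A. split; [exact HA|]. apply Hreg; assumption.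
  - exact Hmain.
Qed.
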